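(* Let $f$ be as in the standing setting and quasi-strongly convex on $X$ with constant $\kappa_f>0$, i.e. $f^*\ge f(x)+\langle\nabla f(x),\bar x-x\rangle+\frac{\kappa_f}{2}\|x-\bar x\|^2$ for all $x\in X$. Let $x^0\in X$ and $x^{k+1}=[x^k-\frac1{L_f}\nabla f(x^k)]_X$ for $k\ge0$ (projected gradient method with constant step size $1/L_f$), and $\bar x^k=[x^k]_{X^*}$. Then, with $\mu_f=\kappa_f/L_f$, $$\|x^k-\bar x^k\|^2\le\left(\frac{1-\mu_f}{1+\mu_f}\right)^k\|x^0-\bar x^0\|^2\qquad\forall k\ge0.$$
   Context: Standing setting: $X\subseteq\mathbb{R}^n$ is a nonempty closed convex set; $f:X\to\mathbb{R}$ is convex and continuously differentiable, with $L_f$-Lipschitz continuous gradient on $X$ ($L_f>0$). Consider $f^*=\min_{x\in X}f(x)$ with optimal set $X^*$ nonempty and closed and $f^*$ finite. $\|\cdot\|$ is the Euclidean norm, $[u]_S$ is the Euclidean projection onto a closed convex set $S$, and $\bar x=[x]_{X^*}$. *)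

(* Defs.v *)
From mathcomp Require Import ssreflect ssrfun ssrbool eqtype ssrnat seq choice fintype.
From Stdlib Require Import Reals.
Open Scope R_scope.

Definition vec (n : nat) : Type := 'I_n -> R.

Definition vadd {n} (u v : vec n) : vec n := fun i => u i + v i.
Definition vsub {n} (u v : vec n) : vec n := fun i => u i - v i.
Definition vscale {n} (a : R) (u : vec n) : vec n := fun i => a * u i.

Definition vinner {n} (u v : vec n) : R :=
  foldr Rplus 0 (map (fun i => u i * v i) (enum 'I_n)).
Definition vnorm {n} (u : vec n) : R := sqrt (vinner u u).

Definition vclosed_set {n} (S : vec n -> Prop) : Prop :=
  forall (u : nat -> vec n) (y : vec n),
    (forall k, S (u k)) ->
    (forall eps, 0 < eps -> exists N, forall k, (N <= k)%nat -> vnorm (vsub (u k) y) < eps) ->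
    S y.

Definition vconvex_set {n} (S : vec n -> Prop) : Prop :=
  forall x y t, S x -> S y -> 0 <= t <= 1 ->
    S (vadd (vscale t x) (vscale (1 - t) y)).

Definition vconvex_on {n} (S : vec n -> Prop) (f : vec n -> R) : Prop :=
  forall x y t, S x -> S y -> 0 <= t <= 1 ->
    f (vadd (vscale t x) (vscale (1 - t) y)) <= t * f x + (1 - t) * f y.

Definition is_gradient_on {n} (S : vec n -> Prop) (f : vec n -> R) (g : vec n -> vec n) : Prop :=
  forall x, S x -> forall eps, 0 < eps -> exists delta, 0 < delta /\
    forall y, S y -> vnorm (vsub y x) < delta ->
      Rabs (f y - f x - vinner (g x) (vsub y x)) <= eps * vnorm (vsub y x).

Definition lipschitz_on {n} (S : vec n -> Prop) (g : vec n -> vec n) (L : R) : Prop :=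
  forall x y, S x -> S y -> vnorm (vsub (g x) (g y)) <= L * vnorm (vsub x y).

Definition is_proj {n} (S : vec n -> Prop) (u p : vec n) : Prop :=
  S p /\ forall q, S q -> vnorm (vsub u p) <= vnorm (vsub u q).

(* Main.v *)
Require Import Defs.
From mathcomp Require Import ssreflect ssrfun ssrbool eqtype ssrnat seq choice fintype.
From Stdlib Require Import Reals Lra Psatz FunctionalExtensionality.
Open Scope R_scope.

Section Lin.
Context {n : nat}.
Implicit Types u v w : vec n.

Lemma sum_ext (F G : 'I_n -> R) l : (forall i, F i = G i) ->
  foldr Rplus 0 (map F l) = foldr Rplus 0 (map G l).
Proof. move=> H; elim: l => [|a l IH] //=; by rewrite H IH. Qed.

Lemma sumA (F G : 'I_n -> R) l :
  foldr Rplus 0 (map (fun i => F i + G i) l) = foldr Rplus 0 (map F l) + foldr Rplus 0 (map G l).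
Proof. elim: l => [|a l IH] /=; [lra| rewrite IH; ring]. Qed.

Lemma sumZ (F : 'I_n -> R) a l :
  foldr Rplus 0 (map (fun i => a * F i) l) = a * foldr Rplus 0 (map F l).
Proof. elim: l => [|b l IH] /=; [ring| rewrite IH; ring]. Qed.

Lemma inner_comm u v : vinner u v = vinner v u.
Proof. rewrite /vinner; apply: sum_ext => i; ring. Qed.

Lemma inner_addl u v w : vinner (vadd u v) w = vinner u w + vinner v w.
Proof. rewrite /vinner -sumA; apply: sum_ext => i; rewrite /vadd; ring. Qed.

Lemma inner_scalel a u w : vinner (vscale a u) w = a * vinner u w.
Proof. rewrite /vinner -sumZ; apply: sum_ext => i; rewrite /vscale; ring. Qed.

Lemma inner_subl u v w : vinner (vsub u v) w = vinner u w - vinner v w.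
Proof.
have -> : vsub u v = vadd u (vscale (-1) v).
  by apply: functional_extensionality => i; rewrite /vsub /vadd /vscale; ring.
rewrite inner_addl inner_scalel; ring.
Qed.

Lemma inner_addr u v w : vinner w (vadd u v) = vinner w u + vinner w v.
Proof. by rewrite inner_comm inner_addl (inner_comm u) (inner_comm v). Qed.
Lemma inner_subr u v w : vinner w (vsub u v) = vinner w u - vinner w v.
Proof. by rewrite inner_comm inner_subl (inner_comm u) (inner_comm v). Qed.
Lemma inner_scaler a u w : vinner w (vscale a u) = a * vinner w u.
Proof. by rewrite inner_comm inner_scalel (inner_comm u). Qed.

Lemma inner_ge0 u : 0 <= vinner u u.
Proof.
rewrite /vinner; elim: (enum 'I_n) => [|a l IH] /=; [lra|].
have := Rle_0_sqr (u a); rewrite /Rsqr; lra.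
Qed.

Lemma vnorm_ge0 u : 0 <= vnorm u.
Proof. exact: sqrt_pos. Qed.

Lemma vnorm_sq u : vnorm u ^ 2 = vinner u u.
Proof. rewrite /vnorm /= Rmult_1_r sqrt_sqrt //; exact: inner_ge0. Qed.

Lemma vnorm_scale a u : 0 <= a -> vnorm (vscale a u) = a * vnorm u.
Proof.
move=> ha; rewrite /vnorm inner_scalel inner_scaler -Rmult_assoc sqrt_mult_alt.
- by rewrite sqrt_square.
- nra.
Qed.

Lemma norm_le_sq u v : vinner u u <= vinner v v -> vnorm u <= vnorm v.
Proof. move=> h; exact: sqrt_le_1_alt. Qed.

Lemma sq_le_norm u v : vnorm u <= vnorm v -> vinner u u <= vinner v v.
Proof.
move=> h; rewrite -!vnorm_sq; have := vnorm_ge0 u; move=> h0 /=; nra.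
Qed.

Lemma cs_key u v t : 0 <= t * t * vinner u u - 2 * t * vinner u v + vinner v v.
Proof.
  have := inner_ge0 (vsub (vscale t u) v).
  rewrite !(inner_subl, inner_subr, inner_scalel, inner_scaler) (inner_comm v u) => h; lra.
Qed.

Lemma cs0 u v : vnorm u = 0 -> vinner u v <= 0.
Proof.
move=> Hu; have hu := vnorm_sq u; simpl in hu.
  apply: Rnot_lt_le => Hp.
  have huu : vinner u u = 0 by rewrite -hu Hu; ring.
  have := cs_key u v ((vinner v v + 1) / (2 * vinner u v)).
  rewrite huu.
  have -> : 2 * ((vinner v v + 1) / (2 * vinner u v)) * vinner u v = vinner v v + 1 by field; lra.
  lra.
Qed.

Lemma cs u v : vinner u v <= vnorm u * vnorm v.
Proof.
have hu := vnorm_sq u; have hv := vnorm_sq v; simpl in hu, hv.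
have nu := vnorm_ge0 u; have nv := vnorm_ge0 v.
case: (Req_dec (vnorm u) 0) => Hu.
  rewrite Hu Rmult_0_l; exact: cs0.
case: (Req_dec (vnorm v) 0) => Hv.
  rewrite Hv Rmult_0_r inner_comm; exact: cs0.
have pu : 0 < vnorm u by lra.
have pv : 0 < vnorm v by lra.
have := cs_key u v (vnorm v / vnorm u).
rewrite -hu -hv => h.
have e : vnorm v / vnorm u * (vnorm v / vnorm u) * (vnorm u * (vnorm u * 1)) = vnorm v * vnorm v by field; lra.
rewrite e in h.
set t := vnorm v / vnorm u in h.
have ht : t * vnorm u = vnorm v by rewrite /t; field; lra.
have ht0 : 0 < t by rewrite /t; apply: Rdiv_lt_0_compat.
have h2 : t * vinner u v <= t * (vnorm u * vnorm v) by nra.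
apply: (Rmult_le_reg_l t) => //.
Qed.
End Lin.


Lemma comb_sub n (z p : vec n) t :
  vsub (vadd (vscale t z) (vscale (1 - t) p)) p = vscale t (vsub z p).
Proof. apply: functional_extensionality => i; rewrite /vsub /vadd /vscale; ring. Qed.

Lemma div_le1 a b : 0 < b -> a <= b -> a / b <= 1.
Proof. move=> hb h; apply: (Rmult_le_reg_r b) => //.
have -> : a / b * b = a by field; lra. lra. Qed.
Lemma div_lt1 a b : 0 < b -> a < b -> a / b < 1.
Proof. move=> hb h; apply: (Rmult_lt_reg_r b) => //.
have -> : a / b * b = a by field; lra. lra. Qed.

Lemma abs_between x r : Rabs x <= r -> - r <= x <= r.
Proof. move=> h; split_Rabs; lra. Qed.

Lemma small_t a b : 0 <= b -> (forall t, 0 < t <= 1 -> a <= t * b) -> a <= 0.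
Proof.
move=> hb H; apply: Rnot_lt_le => ha.
have ht : 0 < a / (a + b) <= 1.
  split; first by apply: Rdiv_lt_0_compat; lra.
  apply: div_le1; lra.
have := H _ ht.
have -> : a / (a + b) * b = a * (b / (a + b)) by field; lra.
have : b / (a + b) < 1 by apply: div_lt1; lra.
nra.
Qed.

Lemma eps_lemma a b c : 0 <= c -> (forall eps, 0 < eps -> a - eps * c <= b) -> a <= b.
Proof.
move=> hc H; apply: le_epsilon => e he.
have h := H (e / (c + 1)) ltac:(apply: Rdiv_lt_0_compat; lra).
have : e / (c + 1) * c <= e.
  have -> : e / (c + 1) * c = e * (c / (c + 1)) by field; lra.
  have : c / (c + 1) <= 1 by apply: div_le1; lra.
  nra.
lra.
Qed.

Lemma proj_vi n (S : vec n -> Prop) u p z :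
  vconvex_set S -> is_proj S u p -> S z -> vinner (vsub u p) (vsub z p) <= 0.
Proof.
move=> hc [hp hmin] hz.
apply: (small_t _ (vinner (vsub z p) (vsub z p) / 2)).
  have := inner_ge0 (vsub z p); lra.
move=> t ht.
have hq := hc z p t hz hp ltac:(lra).
have := sq_le_norm _ _ (hmin _ hq).
have -> : vsub u (vadd (vscale t z) (vscale (1 - t) p)) = vsub (vsub u p) (vscale t (vsub z p)).
  by apply: functional_extensionality => i; rewrite /vsub /vadd /vscale; ring.
set a := vsub u p; set e := vsub z p.
clearbody a e.
rewrite !(inner_subl, inner_subr, inner_scalel, inner_scaler) (inner_comm e a) => h.
nra.
Qed.

Lemma vi_proj n (S : vec n -> Prop) u p :
  S p -> (forall z, S z -> vinner (vsub u p) (vsub z p) <= 0) -> is_proj S u p.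
Proof.
move=> hp H; split => // q hq; apply: norm_le_sq.
have -> : vsub u q = vsub (vsub u p) (vsub q p).
  by apply: functional_extensionality => i; rewrite /vsub; ring.
have := H q hq; have := inner_ge0 (vsub q p).
set a := vsub u p; set e := vsub q p; clearbody a e.
rewrite !(inner_subl, inner_subr) (inner_comm e a); lra.
Qed.

Lemma grad_ineq n (X : vec n -> Prop) f g w z :
  vconvex_set X -> vconvex_on X f -> is_gradient_on X f g -> X w -> X z ->
  f w + vinner (g w) (vsub z w) <= f z.
Proof.
move=> hcX hcf hg hw hz.
apply: (eps_lemma _ _ (vnorm (vsub z w))); first exact: vnorm_ge0.
move=> eps he.
have [delta [hd H]] := hg w hw eps he.
set d := vsub z w.
have nd := vnorm_ge0 d.
set t := Rmin 1 (delta / (2 * (vnorm d + 1))).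
have ht0 : 0 < t.
  apply: Rmin_pos; [lra| apply: Rdiv_lt_0_compat; lra].
have ht1 : t <= 1 by apply: Rmin_l.
have htd : t * vnorm d < delta.
  have h1 : t <= delta / (2 * (vnorm d + 1)) by apply: Rmin_r.
  have h2 : delta / (2 * (vnorm d + 1)) * vnorm d < delta.
    have -> : delta / (2 * (vnorm d + 1)) * vnorm d = delta * (vnorm d / (2 * (vnorm d + 1))) by field; lra.
    have : vnorm d / (2 * (vnorm d + 1)) < 1 by apply: div_lt1; lra.
    nra.
  nra.
have hy := hcX z w t hz hw ltac:(lra).
have hf := hcf z w t hz hw ltac:(lra).
have := H _ hy.
rewrite comb_sub vnorm_scale; last lra.
move=> /(_ htd).
rewrite inner_scaler -/d => /abs_between [h1 h2].
have : t * (f w + vinner (g w) d - eps * vnorm d) <= t * f z by nra.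
move=> h3; apply: (Rmult_le_reg_l t) => //.
Qed.


Lemma INR_le_N (j N : nat) : (j <= N)%nat -> INR j <= INR N.
Proof. move=> h; apply: le_INR; exact/leP. Qed.

Lemma div_ge0 a b : 0 <= a -> 0 < b -> 0 <= a / b.
Proof. move=> ha hb; apply: Rmult_le_pos => //; apply: Rlt_le; exact: Rinv_0_lt_compat. Qed.

Lemma descent n (X : vec n -> Prop) f g L y p :
  vconvex_set X -> vconvex_on X f -> is_gradient_on X f g -> lipschitz_on X g L -> 0 < L ->
  X y -> X p ->
  f p <= f y + vinner (g y) (vsub p y) + L / 2 * vinner (vsub p y) (vsub p y).
Proof.
move=> hcX hcf hg hL hL0 hy hp.
set d := vsub p y.
set I0 := vinner (g y) d.
set D := vinner d d.
have hD : 0 <= D by apply: inner_ge0.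
pose w t := vadd (vscale t p) (vscale (1 - t) y).
have hw : forall t, 0 <= t <= 1 -> X (w t) by move=> t ht; apply: hcX.
have step : forall s t, 0 <= s -> s <= t -> t <= 1 ->
    f (w t) <= f (w s) + (t - s) * (I0 + L * t * D).
  move=> s t hs hst ht1.
  have hwt := hw t ltac:(lra); have hws := hw s ltac:(lra).
  have := grad_ineq _ _ _ _ _ _ hcX hcf hg hwt hws.
  have -> : vsub (w s) (w t) = vscale (s - t) d.
    by apply: functional_extensionality => i; rewrite /w /d /vsub /vadd /vscale; ring.
  rewrite inner_scaler => h1.
  have e1 : vinner (g (w t)) d = I0 + vinner (vsub (g (w t)) (g y)) d by rewrite inner_subl /I0; ring.
  have h2 := cs (vsub (g (w t)) (g y)) d.
  have h3 := hL _ _ hwt hy.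
  have : vsub (w t) y = vscale t d by rewrite /w comb_sub.
  move=> e2; rewrite e2 vnorm_scale in h3; last lra.
  have hn := vnorm_sq d; simpl in hn.
  have nd := vnorm_ge0 d.
  have hb : vinner (vsub (g (w t)) (g y)) d <= L * t * D.
    rewrite /D -hn.
    have := vnorm_ge0 (vsub (g (w t)) (g y)). nra.
  nra.
have ind : forall N : nat, (0 < N)%nat -> forall j : nat, (j <= N)%nat ->
    f (w (INR j / INR N)) <= f y + INR j / INR N * I0 + L * D * (INR j * (INR j + 1)) / (2 * (INR N * INR N)).
  move=> N hN0; have hN : 0 < INR N by apply: lt_0_INR; exact/ltP.
  elim=> [|j IH] hj.
  - have -> : w (INR 0 / INR N) = y.
      by apply: functional_extensionality => i; rewrite /w /vadd /vscale /=; field; lra.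
    rewrite /=; have -> : 0 / INR N = 0 by field; lra.
    lra.
  - have hjN := INR_le_N _ _ hj.
    have IH' := IH (ltnW hj).
    rewrite S_INR in hjN *.
    have hj0 := pos_INR j.
    have := step (INR j / INR N) ((INR j + 1) / INR N).
    have a1 : 0 <= INR j / INR N by apply: div_ge0; lra.
    have a2 : INR j / INR N <= (INR j + 1) / INR N.
      apply: Rmult_le_compat_r; [apply: Rlt_le; apply: Rinv_0_lt_compat|]; lra.
    have a3 : (INR j + 1) / INR N <= 1 by apply: div_le1; lra.
    move=> /(_ a1 a2 a3) h.
    have e : (INR j + 1) / INR N - INR j / INR N = 1 / INR N by field; lra.
    rewrite e in h.
    have e2 : f y + (INR j + 1) / INR N * I0 + L * D * ((INR j + 1) * (INR j + 1 + 1)) / (2 * (INR N * INR N))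
      = (f y + INR j / INR N * I0 + L * D * (INR j * (INR j + 1)) / (2 * (INR N * INR N)))
        + 1 / INR N * (I0 + L * ((INR j + 1) / INR N) * D) by field; lra.
    rewrite e2; lra.
apply: (eps_lemma _ _ 1); first lra.
move=> eps he.
have [m hm] := INR_unbounded (L * D / (2 * eps)).
have hm1 : 0 < INR m.+1 by apply: lt_0_INR; lia.
have hmm : L * D / (2 * eps) < INR m.+1 by rewrite S_INR; move: hm; rewrite /Rgt; lra.
have := ind m.+1 erefl m.+1 (leqnn _).
set M := INR m.+1 in hm1 hmm *.
have -> : M / M = 1 by field; lra.
have -> : w 1 = p.
  by apply: functional_extensionality => i; rewrite /w /vadd /vscale; ring.
have e : L * D * (M * (M + 1)) / (2 * (M * M))
   = L / 2 * D + L * D / (2 * M) by field; lra.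
rewrite e.
have : L * D / (2 * M) <= eps.
  have h1 : L * D <= 2 * eps * M.
    have : L * D / (2 * eps) * (2 * eps) <= M * (2 * eps) by nra.
    have -> : L * D / (2 * eps) * (2 * eps) = L * D by field; lra.
    lra.
  apply: (Rmult_le_reg_r (2 * M)); first lra.
  have -> : L * D / (2 * M) * (2 * M) = L * D by field; lra.
  lra.
rewrite /I0 /D /d; lra.
Qed.


Lemma optset_convex n (X : vec n -> Prop) f fstar :
  vconvex_set X -> vconvex_on X f -> (forall z, X z -> fstar <= f z) ->
  vconvex_set (fun w => X w /\ f w = fstar).
Proof.
move=> hcX hcf hlow x y t [hx fx] [hy fy] ht; split; first exact: hcX.
have h1 := hcf x y t hx hy ht; have h2 := hlow _ (hcX x y t hx hy ht).
rewrite fx fy in h1; apply: Rle_antisym => //; lra.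
Qed.

Lemma qg n (X : vec n -> Prop) f g fstar kappa x xb :
  vconvex_set X -> vconvex_on X f -> is_gradient_on X f g ->
  (forall z, X z -> fstar <= f z) -> 0 < kappa ->
  (forall z zb : vec n, X z -> is_proj (fun w : vec n => X w /\ f w = fstar) z zb ->
     fstar >= f z + vinner (g z) (vsub zb z) + kappa / 2 * (vnorm (vsub z zb)) ^ 2) ->
  X x -> is_proj (fun w : vec n => X w /\ f w = fstar) x xb ->
  kappa / 2 * vinner (vsub x xb) (vsub x xb) <= f x - fstar.
Proof.
move=> hcX hcf hg hlow hk Hq hx hxb.
have hcS := optset_convex _ _ _ _ hcX hcf hlow.
have [[hxbX hxbf] _] := hxb.
set e := vsub x xb.
set c := kappa / 2 * vinner e e.
have hc : 0 <= c by have := inner_ge0 e; rewrite /c; nra.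
pose xt t := vadd (vscale t x) (vscale (1 - t) xb).
have hxt : forall t, 0 <= t <= 1 -> X (xt t) by move=> t ht; apply: hcX.
pose psi t := f (xt t) - fstar.
have psi0 : forall t, 0 <= t <= 1 -> 0 <= psi t by move=> t ht; have := hlow _ (hxt t ht); rewrite /psi; lra.
have vi := fun z hz => proj_vi _ _ _ _ z hcS hxb hz.
have hproj : forall t, 0 <= t <= 1 -> is_proj (fun w => X w /\ f w = fstar) (xt t) xb.
  move=> t ht; apply: vi_proj => // z hz.
  rewrite /xt comb_sub inner_scalel; have := vi z hz; rewrite -/e; nra.
have qsc : forall s, 0 <= s <= 1 ->
    psi s + c * (s * s) <= s * vinner (g (xt s)) e.
  move=> s hs; have := Hq _ _ (hxt s hs) (hproj s hs).
  have -> : vsub xb (xt s) = vscale (- s) e.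
    by apply: functional_extensionality => i; rewrite /xt /e /vsub /vadd /vscale; ring.
  rewrite /xt comb_sub -/e vnorm_sq inner_scaler !(inner_scalel, inner_scaler) /psi /c /=.
  rewrite /xt; nra.
have step : forall s t, 0 < s -> s <= t -> t <= 1 ->
    t * psi s + (t - s) * (s * s) * c <= s * psi t.
  move=> s t hs hst ht1.
  have hg1 := grad_ineq _ _ _ _ _ _ hcX hcf hg (hxt s ltac:(lra)) (hxt t ltac:(lra)).
  have : vsub (xt t) (xt s) = vscale (t - s) e.
    by apply: functional_extensionality => i; rewrite /xt /e /vsub /vadd /vscale; ring.
  move=> E; rewrite E inner_scaler in hg1.
  have q := qsc s ltac:(lra).
  rewrite /psi in q *.
  set G := vinner (g (xt s)) e in hg1 q.
  have : 0 <= (t - s) * (s * G - (f (xt s) - fstar) - c * (s * s)) by apply: Rmult_le_pos; lra.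
  nra.
have ind : forall d N, 0 < d < 1 -> (0 < N)%nat ->
    c * (1 - d) * (1 - (1 - d) / (INR N * d)) <= psi 1.
  move=> d N hd hN0.
  have hN : 0 < INR N by apply: lt_0_INR; exact/ltP.
  set h := (1 - d) / INR N.
  have hh : 0 < h by apply: Rdiv_lt_0_compat; lra.
  have claim : forall j, (j <= N)%nat ->
      (d + INR j * h) * (INR j * (h - h * h / d) * c) <= psi (d + INR j * h).
    elim=> [|j IH] hj.
    - rewrite /=; have := psi0 (d + 0 * h) ltac:(lra); lra.
    - have IH' := IH (ltnW hj).
      have hjN := INR_le_N _ _ hj.
      have hj0 := pos_INR j.
      rewrite S_INR in hjN *.
      have hNh : INR N * h = 1 - d by rewrite /h; field; lra.
      have ht1 : d + (INR j + 1) * h <= 1 by nra.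
      have hs0 : 0 < d + INR j * h by nra.
      have := step (d + INR j * h) (d + (INR j + 1) * h) hs0 ltac:(nra) ht1.
      set s := d + INR j * h in IH' hs0 *.
      have -> : d + (INR j + 1) * h = s + h by rewrite /s; ring.
      set t := s + h.
      set A := INR j * (h - h * h / d) * c in IH'.
      have -> : (INR j + 1) * (h - h * h / d) * c = A + (h - h * h / d) * c by rewrite /A; ring.
      have -> : t - s = h by rewrite /t; ring.
      move=> hst.
      have hsd : d <= s by rewrite /s; nra.
      have key : t * (A + (h - h * h / d) * c) <= t * A + h * s * c.
        have -> : t * (A + (h - h * h / d) * c) = t * A + h * s * c - c * h * h * (t / d - 1).
          by rewrite /t; field; lra.
        have : 0 <= t / d - 1.
          have : 1 <= t / d.
            apply: (Rmult_le_reg_r d); first lra.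
            have -> : t / d * d = t by field; lra.
            rewrite /t; lra.
          lra.
        move=> h0; have : 0 <= c * h * h * (t / d - 1) by apply: Rmult_le_pos; [nra|lra].
        lra.
      have ht0 : 0 < t by rewrite /t; lra.
      have h2 : s * (t * A + h * s * c) <= s * psi t.
        have : t * (s * A) <= t * psi s by apply: Rmult_le_compat_l; lra.
        nra.
      have h3 : t * A + h * s * c <= psi t by apply: (Rmult_le_reg_l s) => //.
      lra.
  have := claim N (leqnn _).
  have -> : d + INR N * h = 1 by rewrite /h; field; lra.
  have -> : INR N * (h - h * h / d) * c = c * (1 - d) * (1 - (1 - d) / (INR N * d)).
    by rewrite /h; field; lra.
  lra.
have -> : f x - fstar = psi 1.
  by rewrite /psi; congr (f _ - _); apply: functional_extensionality => i; rewrite /xt /vadd /vscale; ring.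
rewrite -/e -/c.
apply: (eps_lemma _ _ 1); first lra.
move=> eps he.
set d := Rmin (1/2) (eps / (2 * (c + 1))).
have hd0 : 0 < d by apply: Rmin_pos; [lra| apply: Rdiv_lt_0_compat; lra].
have hd1 : d <= 1/2 by apply: Rmin_l.
have hdc : d * c <= eps / 2.
  have : d <= eps / (2 * (c + 1)) by apply: Rmin_r.
  move=> h; have : eps / (2 * (c + 1)) * c <= eps / 2.
    have -> : eps / (2 * (c + 1)) * c = eps / 2 * (c / (c + 1)) by field; lra.
    have : c / (c + 1) <= 1 by apply: div_le1; lra.
    nra.
  nra.
have [m hm] := INR_unbounded (2 * (c + 1) / (eps * d)).
have hm1 : 0 < INR m.+1 by apply: lt_0_INR; lia.
have hmm : 2 * (c + 1) / (eps * d) < INR m.+1 by rewrite S_INR; move: hm; rewrite /Rgt; lra.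
have := ind d m.+1 ltac:(lra) erefl.
set M := INR m.+1 in hm1 hmm *.
set q := (1 - d) / (M * d).
have hq0 : 0 <= q by apply: div_ge0; nra.
have hqc : q * c <= eps / 2.
  have hMd : 0 < M * d by nra.
  have h1 : 2 * (c + 1) < M * (eps * d).
    have : 2 * (c + 1) / (eps * d) * (eps * d) < M * (eps * d) by apply: Rmult_lt_compat_r; nra.
    have -> : 2 * (c + 1) / (eps * d) * (eps * d) = 2 * (c + 1) by field; lra.
    lra.
  have -> : q * c = (1 - d) * c / (M * d) by rewrite /q; field; lra.
  apply: (Rmult_le_reg_r (M * d)) => //.
  have -> : (1 - d) * c / (M * d) * (M * d) = (1 - d) * c by field; lra.
  nra.
nra.
Qed.


Theorem theorem11 (n : nat) (X : vec n -> Prop) (f : vec n -> R)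
  (gradf : vec n -> vec n) (Lf fstar kappa : R) (x xbar : nat -> vec n) :
  (* standing setting *)
  (exists z : vec n, X z) -> vclosed_set X -> vconvex_set X ->
  vconvex_on X f -> is_gradient_on X f gradf ->
  0 < Lf -> lipschitz_on X gradf Lf ->
  (forall z : vec n, X z -> fstar <= f z) ->
  (exists z : vec n, X z /\ f z = fstar) ->
  vclosed_set (fun z : vec n => X z /\ f z = fstar) ->
  (* quasi-strong convexity *)
  0 < kappa ->
  (forall z zb : vec n, X z -> is_proj (fun w : vec n => X w /\ f w = fstar) z zb ->
     fstar >= f z + vinner (gradf z) (vsub zb z) + kappa / 2 * (vnorm (vsub z zb)) ^ 2) ->
  (* projected gradient method *)
  X (x 0%nat) ->
  (forall k, is_proj X (vsub (x k) (vscale (1 / Lf) (gradf (x k)))) (x (S k))) ->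
  (forall k, is_proj (fun w : vec n => X w /\ f w = fstar) (x k) (xbar k)) ->
  forall k : nat,
    (vnorm (vsub (x k) (xbar k))) ^ 2 <=
      ((1 - kappa / Lf) / (1 + kappa / Lf)) ^ k * (vnorm (vsub (x 0%nat) (xbar 0%nat))) ^ 2.
Proof.
move=> _ _ hcX hcf hg hL0 hL hlow _ _ hk Hq hx0 hit hbar.
have hX : forall k, X (x k) by case=> [|k] //; have [] := hit k.
pose Dk k := vinner (vsub (x k) (xbar k)) (vsub (x k) (xbar k)).
have hD0 : forall k, 0 <= Dk k by move=> k; apply: inner_ge0.
have step : forall k, (Lf + kappa) * Dk k.+1 <= (Lf - kappa) * Dk k.
  move=> k.
  set y := x k; set p := x k.+1; set yb := xbar k; set pb := xbar k.+1.
  set G := gradf y.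
  have hy := hX k; have hp := hX k.+1.
  have [[hybX hybf] _] := hbar k.
  have hvi := proj_vi _ _ _ _ yb hcX (hit k) hybX.
  have hde := descent _ _ _ _ _ y p hcX hcf hg hL hL0 hy hp.
  have hq := Hq _ _ hy (hbar k).
  have hqg := qg _ _ _ _ _ _ _ _ hcX hcf hg hlow hk Hq hp (hbar k.+1).
  have hmin := sq_le_norm _ _ ((hbar k.+1).2 yb (conj hybX hybf)).
  rewrite /Dk -/y -/p -/yb -/pb.
  rewrite vnorm_sq in hq.
  rewrite -/y -/p -/yb -/G in hvi hde hq hqg hmin.
  have e1 : vsub (vsub y (vscale (1 / Lf) G)) p = vsub (vsub (vsub y yb) (vsub p yb)) (vscale (1 / Lf) G).
    apply: functional_extensionality => i; rewrite /vsub /vscale; ring.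
  rewrite e1 in hvi.
  have e2 : vsub yb p = vscale (-1) (vsub p yb).
    apply: functional_extensionality => i; rewrite /vsub /vscale; ring.
  rewrite e2 in hvi.
  have e3 : vsub p y = vsub (vsub p yb) (vsub y yb).
    apply: functional_extensionality => i; rewrite /vsub /vscale; ring.
  rewrite e3 in hde.
  have e4 : vsub yb y = vscale (-1) (vsub y yb).
    apply: functional_extensionality => i; rewrite /vsub /vscale; ring.
  rewrite e4 in hq.
  move: hvi hde hq hqg hmin.
  set A := vsub y yb; set B := vsub p yb; set P := vsub p pb.
  clearbody A B P.
  rewrite !(inner_subl, inner_subr, inner_scalel, inner_scaler) (inner_comm B A).
  move=> hvi hde hq hqg hmin.
  have hvi' : vinner G B <= Lf * (vinner A B - vinner B B).
    have : 1 / Lf * vinner G B <= vinner A B - vinner B B by nra.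
    move=> h; apply: (Rmult_le_reg_l (1 / Lf)); first by apply: Rdiv_lt_0_compat; lra.
    have -> : 1 / Lf * (Lf * (vinner A B - vinner B B)) = vinner A B - vinner B B by field; lra.
    lra.
  nra.
move=> k.
rewrite !vnorm_sq -/(Dk k) -/(Dk 0%nat).
set q := (1 - kappa / Lf) / (1 + kappa / Lf).
have hq : q = (Lf - kappa) / (Lf + kappa) by rewrite /q; field; lra.
case: (Rle_lt_dec 0 q) => hq0.
- have stepq : forall k, Dk k.+1 <= q * Dk k.
    move=> j; rewrite hq.
    apply: (Rmult_le_reg_l (Lf + kappa)); first lra.
    have -> : (Lf + kappa) * ((Lf - kappa) / (Lf + kappa) * Dk j) = (Lf - kappa) * Dk j by field; lra.
    exact: step.
  elim: k => [|k IH]; first by rewrite /=; lra.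
  apply: Rle_trans (stepq k) _.
  rewrite /= Rmult_assoc; apply: Rmult_le_compat_l => //.
- have hlk : Lf - kappa < 0.
    rewrite hq in hq0.
    apply: Rnot_le_lt => h; have : 0 <= (Lf - kappa) / (Lf + kappa) by apply: div_ge0; lra.
    lra.
  have z : forall j, Dk j = 0.
    move=> j; have := step j; have := hD0 j.+1; have := hD0 j; nra.
  rewrite !z; lra.
Qed.
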